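(* Let $U=[a_1,b_1]\cup\dots\cup[a_k,b_k]\subseteq\mathbb{R}$ with $a_1\le b_1<a_2\le b_2<\dots<a_k\le b_k$, and let $S=\{x-a_1,\ (x-a_2)(x-b_1),\ \dots,\ (x-a_k)(x-b_{k-1}),\ b_k-x\}\subseteq\mathbb{R}[x]$. Then in $\mathbb{R}[x]$ the preordering generated by $S$ equals the quadratic module generated by $S$, i.e. $T_S=M_S$. Consequently the same equality $T_S=M_S$ holds for the preordering and quadratic module generated by $S$ in $\mathbb{R}[x,y]$.
   Context: For a finite set $S=\{s_1,\dots,s_m\}$ in a polynomial ring $A$ (here $A=\mathbb{R}[x]$ or $\mathbb{R}[x,y]$), the quadratic module $M_S$ generated by $S$ is the set of all $\sigma_0+\sigma_1s_1+\dots+\sigma_ms_m$ with each $\sigma_i$ a sum of squares of elements of $A$; the preordering $T_S$ generated by $S$ is the set of all $\sum_{e\in\{0,1\}^m}\sigma_e s_1^{e_1}\cdots s_m^{e_m}$ with each $\sigma_e$ a sum of squares in $A$. The set $S$ above is called the natural choice of generators for $U$. *)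

(* Defs.v *)
From HB Require Import structures.
From mathcomp Require Import all_boot all_order all_algebra.
From mathcomp Require Import reals.
Set Implicit Arguments. Unset Strict Implicit. Unset Printing Implicit Defensive.
Import Order.TTheory GRing.Theory Num.Theory.
Local Open Scope ring_scope.

Definition sos (A : comRingType) (p : A) : Prop :=
  exists l : seq A, p = \sum_(q <- l) q ^+ 2.

Definition qmodule (A : comRingType) (S : seq A) (p : A) : Prop :=
  exists (s0 : A) (sig : 'I_(size S) -> A),
    sos s0 /\ (forall i, sos (sig i)) /\
    p = s0 + \sum_(i < size S) sig i * S`_i.

(* preordering T_S generated by S: sum over e in {0,1}^m of sigma_e * prod s_i^{e_i} *)
Definition preordering (A : comRingType) (S : seq A) (p : A) : Prop :=
  exists sig : {set 'I_(size S)} -> A,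
    (forall e, sos (sig e)) /\
    p = \sum_(e : {set 'I_(size S)}) sig e * \prod_(i in e) S`_i.

(* natural generators for U = [a 0, b 0] ∪ ... ∪ [a k, b k] (k+1 intervals):
   x - a_0, (x - a_{i+1})(x - b_i) for i < k, b_k - x *)
Definition natgens (R : realType) (k : nat) (a b : nat -> R) : seq {poly R} :=
  ('X - (a 0%N)%:P) ::
    rcons [seq ('X - (a i.+1)%:P) * ('X - (b i)%:P) | i <- iota 0 k]
          ((b k)%:P - 'X).

(* Main.v *)
Require Import Defs.
From HB Require Import structures.
From mathcomp Require Import all_boot all_order all_algebra.
From mathcomp Require Import reals.
From mathcomp Require Import zify ring lra.
From mathcomp Require Import polyrcf boolp.
From mathcomp Require classical_sets topology normedtype derive.
Import Order.TTheory GRing.Theory Num.Theory.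
Local Open Scope ring_scope.
Set Implicit Arguments. Unset Strict Implicit. Unset Printing Implicit Defensive.

Section Generic.
Variable A : comRingType.
Implicit Types (p q : A) (S : seq A).

Lemma sos0 : sos (0 : A). Proof. by exists [::]; rewrite big_nil. Qed.
Lemma sos_sqr p : sos (p ^+ 2). Proof. by exists [:: p]; rewrite big_seq1. Qed.
Lemma sosD p q : sos p -> sos q -> sos (p + q).
Proof. by move=> [l1 ->] [l2 ->]; exists (l1 ++ l2); rewrite big_cat. Qed.
Lemma sosM p q : sos p -> sos q -> sos (p * q).
Proof.
move=> [l1 ->] [l2 ->]; exists [seq x * y | x <- l1, y <- l2].
rewrite big_allpairs_dep /= mulr_suml; apply: eq_bigr => x _.
by rewrite mulr_sumr; apply: eq_bigr => y _; rewrite exprMn.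
Qed.
Lemma sos1 : sos (1 : A). Proof. by rewrite -(expr1n _ 2); apply: sos_sqr. Qed.
Lemma sos_sum (I : Type) (r : seq I) (F : I -> A) :
  (forall i, sos (F i)) -> sos (\sum_(i <- r) F i).
Proof.
move=> h; elim: r => [|x r ih]; first by rewrite big_nil; apply: sos0.
by rewrite big_cons; apply: sosD.
Qed.
Lemma sos_mulsqr p q : sos p -> sos (q ^+ 2 * p).
Proof. by move=> h; apply: sosM => //; apply: sos_sqr. Qed.

Definition QM S := qmodule S.

Lemma qm_add S p q : QM S p -> QM S q -> QM S (p + q).
Proof.
move=> [s0 [sg [h0 [hs ->]]]] [t0 [tg [k0 [kt ->]]]].
exists (s0 + t0), (fun i => sg i + tg i); split; first exact: sosD.
split; first by move=> i; apply: sosD.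
rewrite -!addrA; congr (_ + _); rewrite addrCA; congr (_ + _).
by rewrite -big_split /=; apply: eq_bigr => i _; rewrite mulrDl.
Qed.

Lemma qm_mulsos S s p : sos s -> QM S p -> QM S (s * p).
Proof.
move=> hs [s0 [sg [h0 [hg ->]]]].
exists (s * s0), (fun i => s * sg i); split; first exact: sosM.
split; first by move=> i; apply: sosM.
by rewrite mulrDr mulr_sumr; congr (_ + _); apply: eq_bigr => i _; rewrite mulrA.
Qed.

Lemma qm_sos S p : sos p -> QM S p.
Proof.
move=> h; exists p, (fun _ => 0); split => //; split; first by move=> _; apply: sos0.
by rewrite big1 ?addr0 // => i _; rewrite mul0r.
Qed.

Lemma qm0 S : QM S 0. Proof. exact/qm_sos/sos0. Qed.

Lemma qm_gen S i s : (i < size S)%N -> sos s -> QM S (s * S`_i).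
Proof.
move=> hi hs; exists 0, (fun j : 'I_(size S) => if nat_of_ord j == i then s else 0).
split; first exact: sos0.
split; first by move=> j; case: ifP => _ //; apply: sos0.
rewrite add0r (bigD1 (Ordinal hi)) //= eqxx big1 ?addr0 //.
move=> j /negbTE hj; case: ifP => [/eqP hji|_]; last by rewrite mul0r.
by move: hj; rewrite -val_eqE /= hji eqxx.
Qed.

Lemma qm_gen1 S i : (i < size S)%N -> QM S (S`_i).
Proof. by move=> hi; rewrite -[S`_i]mul1r; apply: qm_gen => //; apply: sos1. Qed.

Lemma qm_sum S (I : Type) (r : seq I) (F : I -> A) :
  (forall i, QM S (F i)) -> QM S (\sum_(i <- r) F i).
Proof.
move=> h; elim: r => [|x r ih]; first by rewrite big_nil; apply: qm0.
by rewrite big_cons; apply: qm_add.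
Qed.

Lemma qm_scale S (c : A) p : sos c -> QM S p -> QM S (p * c).
Proof. by move=> hc hp; rewrite mulrC; apply: qm_mulsos. Qed.

Definition PR S := preordering S.

Lemma pr_add S p q : PR S p -> PR S q -> PR S (p + q).
Proof.
move=> [sg [hs ->]] [tg [ht ->]]; exists (fun e => sg e + tg e); split.
  by move=> e; apply: sosD.
by rewrite -big_split /=; apply: eq_bigr => e _; rewrite mulrDl.
Qed.

Lemma pr0 S : PR S 0.
Proof.
exists (fun _ => 0); split; first by move=> _; apply: sos0.
by rewrite big1 // => e _; rewrite mul0r.
Qed.

Lemma pr_gen S (e0 : {set 'I_(size S)}) s : sos s ->
  PR S (s * \prod_(i in e0) S`_i).
Proof.
move=> hs; exists (fun e => if e == e0 then s else 0); split.
  by move=> e; case: ifP => _ //; apply: sos0.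
rewrite (bigD1 e0) //= eqxx [X in _ = _ + X]big1 ?addr0 // => e /negbTE ->.
by rewrite mul0r.
Qed.

Lemma qm_pr S p : QM S p -> PR S p.
Proof.
move=> [s0 [sg [h0 [hg ->]]]]; apply: pr_add.
  by have := pr_gen (set0 : {set 'I_(size S)}) h0; rewrite big_set0 mulr1.
elim/big_ind: _ => //; first exact: pr0; first exact: pr_add.
move=> i _; have := pr_gen [set i] (hg i); by rewrite big_set1.
Qed.

Lemma prod_qm_aux S :
  (forall i j, (i < size S)%N -> (j < size S)%N -> i != j -> QM S (S`_i * S`_j)) ->
  forall n (e : {set 'I_(size S)}) s, (#|e| <= n)%N -> sos s ->
    QM S (s * \prod_(i in e) S`_i).
Proof.
move=> hpair; elim=> [|n ih] e s he hs.
  move: he; rewrite leqn0 cards_eq0 => /eqP ->; rewrite big_set0 mulr1.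
  exact: qm_sos.
have [he1|he1] := leqP #|e| 1.
  have [/eqP e0|] := eqVneq #|e| 0%N.
    move: e0; rewrite cards_eq0 => /eqP ->; rewrite big_set0 mulr1; exact: qm_sos.
  move=> hne; have /cards1P [i ->] : #|e| == 1%N.
    by rewrite eqn_leq he1 lt0n hne.
  by rewrite big_set1; apply: qm_gen.
have [i ie] : exists i, i \in e.
  by apply/set0Pn; rewrite -card_gt0 (ltn_trans _ he1).
have [j je] : exists j, j \in e :\ i.
  apply/set0Pn; rewrite -card_gt0.
  by move: he1; rewrite (cardsD1 i e) ie add1n ltnS.
move: (je); rewrite in_setD1 => /andP [ji je']; have ij : nat_of_ord i != j by rewrite eq_sym.
set e' := e :\ i :\ j.
have ce' : #|e'| = (#|e| - 2)%N.
  rewrite /e' (cardsD1 i e) ie (cardsD1 j (e :\ i)) je /=.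
  by rewrite !add1n subn2.
have he' : (#|e'| <= n.-1)%N.
  rewrite ce'; move: he; clear; lia.
have -> : \prod_(k in e) S`_k = S`_i * S`_j * \prod_(k in e') S`_k.
  by rewrite (big_setD1 i ie) (big_setD1 j je) /= mulrA.
have [s0 [sg [h0 [hg Hij]]]] := hpair i j (ltn_ord i) (ltn_ord j) ij.
rewrite Hij mulrDl mulrDr; apply: qm_add.
  rewrite mulrA; apply: ih; first by rewrite (leq_trans he') // leq_pred.
  exact: sosM.
rewrite mulr_suml mulr_sumr; apply: qm_sum => l.
have [le|le] := boolP (l \in e').
  rewrite (big_setD1 l le) /=.
  set P := \big[_/_]_(_ in _) _.
  have -> : s * (sg l * S`_l * (S`_l * P)) = (s * sg l * S`_l ^+ 2) * P by ring.
  apply: ih.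
    have := cardsD1 l e'; rewrite le ce' => h; move: he he1 h.
    move: (#|e|) (#|e' :\ l|) => m1 m2; clear; lia.
  by apply: sosM; [apply: sosM|apply: sos_sqr].
have -> : sg l * S`_l * \prod_(k in e') S`_k = sg l * \prod_(k in l |: e') S`_k.
  rewrite [in RHS](big_setD1 l) ?setU11 //= -mulrA; congr (_ * (_ * _)).
  by rewrite setU1K.
rewrite mulrA; apply: ih; last exact: sosM.
rewrite cardsU1 le add1n ce'; move: he he1; move: (#|_|) => m; clear; lia.
Qed.

Lemma prod_qm S (e : {set 'I_(size S)}) :
  (forall i j, (i < size S)%N -> (j < size S)%N -> i != j -> QM S (S`_i * S`_j)) ->
  QM S (\prod_(i in e) S`_i).
Proof.
move=> h; rewrite -[X in QM S X]mul1r; apply: (prod_qm_aux h (leqnn _)).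
exact: sos1.
Qed.

Lemma pr_qm S p :
  (forall i j, (i < size S)%N -> (j < size S)%N -> i != j -> QM S (S`_i * S`_j)) ->
  PR S p -> QM S p.
Proof.
move=> h [sg [hs ->]]; elim/big_ind: _ => //; first exact: qm0; first exact: qm_add.
by move=> e _; apply: qm_mulsos => //; apply: prod_qm.
Qed.

End Generic.

Section Morph.
Variables (A B : comRingType) (f : {rmorphism A -> B}).

Lemma sos_morph (p : A) : sos p -> sos (f p).
Proof.
move=> [l ->]; exists (map f l); rewrite rmorph_sum big_map.
by apply: eq_bigr => x _; rewrite rmorphXn.
Qed.

Lemma qm_morph (S : seq A) p : QM S p -> QM (map f S) (f p).
Proof.
move=> [s0 [sg [h0 [hg ->]]]]; rewrite rmorphD rmorph_sum; apply: qm_add.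
  exact/qm_sos/sos_morph.
apply: qm_sum => i; rewrite rmorphM -(nth_map 0 0) // ?ltn_ord //.
by apply: qm_gen; [rewrite size_map ltn_ord| apply: sos_morph].
Qed.
End Morph.

Module MinPoly.
Import classical_sets topology normedtype derive.
Import numFieldNormedType.Exports.
Lemma poly_has_min (R : realType) (f : {poly R}) :
  (forall x, 0 <= f.[x]) -> exists x0, forall x, f.[x0] <= f.[x].
Proof.
move=> f0.
have lead_pos : forall g : {poly R}, (forall x, 0 <= g.[x]) -> (1 < size g)%N ->
   exists n, forall x, n <= x -> g.[0] <= g.[x].
  move=> g g0 sg.
  have gn0 : g != 0 by rewrite -size_poly_gt0 (ltn_trans _ sg).
  have [lp|ln] := ltrP 0 (lead_coef g).
    have [n hn] := poly_lim_infty g.[0] lp sg.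
    by exists n.
  exfalso.
  have ln' : 0 < lead_coef (- g).
    by rewrite lead_coefN oppr_gt0 lt_neqAle ln lead_coef_eq0 gn0.
  have sg' : (1 < size (- g))%N by rewrite size_polyN.
  have [n hn] := @poly_lim_infty _ (- g) 1 ln' sg'.
  have := hn n (lexx _); rewrite hornerN.
  have := g0 n; rewrite -lerN2 => h1 h2.
  have := le_trans h2 h1; rewrite oppr0 ler10 //.
have [sf|sf] := leqP (size f) 1%N.
  exists 0 => x; rewrite [f]size1_polyC // !hornerC //.
have [n1 hn1] := lead_pos f f0 sf.
have g0 : forall x, 0 <= (f \Po - 'X).[x].
  by move=> x; rewrite horner_comp.
have sg : (1 < size (f \Po - 'X))%N.
  by rewrite size_comp_poly2 // size_polyN size_polyX.
have [n2 hn2] := lead_pos _ g0 sg.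
set M := Num.max (Num.max n1 n2) 0.
have M0 : 0 <= M by rewrite le_max lexx orbT.
have [c _ hc] : exists2 c, c \in `[- M, M] & forall t, t \in `[- M, M] -> f.[c] <= f.[t].
  apply: (EVT_min (f := horner f)).
    by rewrite (le_trans _ M0) // oppr_le0.
  apply/continuous_subspaceT => /= x.
  exact: continuous_horner.
exists c => x.
have cle0 : f.[c] <= f.[0] by apply: hc; rewrite in_itv /= oppr_le0 M0.
have [xM|xM] := lerP `|x| M.
  by apply: hc; rewrite in_itv /= -ler_norml.
apply: (le_trans cle0).
have n1M : n1 <= M by rewrite le_max le_max lexx.
have n2M : n2 <= M by rewrite le_max le_max lexx orbT.
have [x0|x0] := lerP 0 x.
  apply: hn1; rewrite (le_trans n1M) // ltW //.
  by move: xM; rewrite ger0_norm.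
have h := hn2 (- x); rewrite !horner_comp !hornerE opprK oppr0 in h; apply: h.
rewrite (le_trans n2M) // ltW //.
by move: xM; rewrite ltr0_norm.
Qed.
End MinPoly.


Section Real.
Variable R : realType.
Implicit Types (f g p : {poly R}) (x y : R).

Lemma sosC (c : R) : 0 <= c -> sos (c%:P : {poly R}).
Proof.
move=> c0; exists [:: (Num.sqrt c)%:P]; by rewrite big_seq1 -rmorphXn /= sqr_sqrtr.
Qed.

Lemma neg_nbhd f x0 : f.[x0] < 0 ->
  exists2 d, 0 < d & forall y, `|y - x0| < d -> f.[y] < 0.
Proof.
move=> h; have hh : 0 < - f.[x0] by rewrite oppr_gt0.
have [d d0 hd] := poly_cont x0 f hh.
exists d => // y /hd; rewrite ltr_norml => /andP[_]; rewrite ltrBlDr addNr //.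
Qed.

Lemma edge_l f u v : u < v -> (forall y, u < y < v -> 0 <= f.[y]) -> 0 <= f.[u].
Proof.
move=> uv h; rewrite leNgt; apply/negP => /neg_nbhd [d d0 hd].
set m := Num.min d (v - u).
have m0 : 0 < m by rewrite lt_min d0 subr_gt0.
have m1 : m <= d by rewrite ge_min lexx.
have m2 : m <= v - u by rewrite ge_min lexx orbT.
have : 0 <= f.[u + m / 2] by apply: h; apply/andP; split; lra.
rewrite leNgt => /negP; apply; apply: hd.
rewrite addrAC subrr add0r ger0_norm; lra.
Qed.

Lemma edge_r f u v : u < v -> (forall y, u < y < v -> 0 <= f.[y]) -> 0 <= f.[v].
Proof.
move=> uv h; rewrite leNgt; apply/negP => /neg_nbhd [d d0 hd].
set m := Num.min d (v - u).
have m0 : 0 < m by rewrite lt_min d0 subr_gt0.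
have m1 : m <= d by rewrite ge_min lexx.
have m2 : m <= v - u by rewrite ge_min lexx orbT.
have : 0 <= f.[v - m / 2] by apply: h; apply/andP; split; lra.
rewrite leNgt => /negP; apply; apply: hd.
rewrite addrAC subrr add0r normrN ger0_norm; lra.
Qed.

Lemma poly_has_min f : (forall x, 0 <= f.[x]) -> exists x0, forall x, f.[x0] <= f.[x].
Proof. exact: MinPoly.poly_has_min. Qed.


Lemma NN f : (forall x, 0 <= f.[x]) -> sos f.
Proof.
move: {2}(size f) (leqnn (size f)) => n; elim: n f => [|n ih] f hs hf.
  by move: hs; rewrite leqn0 size_poly_eq0 => /eqP ->; apply: sos0.
have [s1|s1] := leqP (size f) 1.
  rewrite [f]size1_polyC //; apply: sosC.
  by rewrite -horner_coef0.
have [x0 hx0] := poly_has_min hf.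
set c := f.[x0].
set h := f - c%:P.
have hx : forall y, 0 <= h.[y] by move=> y; rewrite !hornerE subr_ge0.
have rh : root h x0 by rewrite rootE !hornerE subrr.
have [h1 eh1] := factor_theorem _ _ rh.
have rh1 : root h1 x0.
  rewrite rootE; apply/negPn/negP => hn.
  have [hneg|hpos] := ltrP h1.[x0] 0.
    have [d d0 hd] := neg_nbhd hneg.
    have : 0 <= h.[x0 + d / 2] by apply: hx.
    rewrite eh1 !hornerE addrAC subrr add0r.
    have : h1.[x0 + d/2] < 0 by apply: hd; rewrite addrAC subrr add0r ger0_norm; lra.
    move=> a; rewrite pmulr_lge0 ?leNgt ?a //; lra.
  have hpos' : (- h1).[x0] < 0.
    by rewrite hornerN oppr_lt0 lt_neqAle eq_sym hn.
  have [d d0 hd] := neg_nbhd hpos'.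
  have : 0 <= h.[x0 - d / 2] by apply: hx.
  rewrite eh1 !hornerE addrAC subrr add0r.
  have : (- h1).[x0 - d/2] < 0.
    by apply: hd; rewrite addrAC subrr add0r normrN ger0_norm; lra.
  rewrite hornerN oppr_lt0 => a; rewrite nmulr_lge0 ?leNgt ?a //; lra.
have [h2 eh2] := factor_theorem _ _ rh1.
have eh : h = h2 * ('X - x0%:P) ^+ 2 by rewrite eh1 eh2 -mulrA -expr2.
have h2pos : forall y, y != x0 -> 0 <= h2.[y].
  move=> y yx; have := hx y; rewrite eh hornerM horner_exp hornerXsubC.
  have : 0 < (y - x0) ^+ 2 by rewrite exprn_even_gt0 //= subr_eq0.
  by move=> a; rewrite pmulr_lge0.
have h2pos' : forall y, 0 <= h2.[y].
  move=> y; have [->|yx] := eqVneq y x0; last exact: h2pos.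
  apply: (@edge_l _ x0 (x0 + 1)); first lra.
  by move=> z /andP [z1 z2]; apply: h2pos; rewrite gt_eqF.
have sh : size h = size f.
  by rewrite /h size_polyDl // size_polyN (leq_ltn_trans (size_polyC_leq1 _)).
have sh2 : (size h2 < size f)%N.
  have [->|h2n0] := eqVneq h2 0; first by rewrite size_poly0 (ltn_trans _ s1).
  rewrite -sh eh size_mul ?expf_neq0 ?polyXsubC_eq0 // size_exp_XsubC.
  by rewrite addnS /= -{1}[size h2]addn0 ltn_add2l.
have -> : f = c%:P + h2 * ('X - x0%:P) ^+ 2 by rewrite -eh /h addrC subrK.
apply: sosD; first by apply: sosC; have := hf x0.
apply: sosM; last exact: sos_sqr.
by apply: ih => //; rewrite -ltnS (leq_trans sh2).
Qed.

End Real.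


Section Real2.
Variable R : realType.
Implicit Types (f g p : {poly R}) (x y : R).

Lemma powle n x y : 0 <= x -> x <= y -> x ^+ n <= y ^+ n.
Proof. by move=> x0 xy; apply: lerXn2r => //; rewrite nnegrE // (le_trans x0). Qed.

Lemma Bern (t : R) n : 0 <= t <= 1 -> t ^+ n * (1 + n%:R * (1 - t)) <= 1.
Proof.
move=> /andP [t0 t1]; elim: n => [|n ih]; first by rewrite expr0 mul0r addr0 mulr1.
apply: le_trans ih; rewrite exprS.
have tn : 0 <= t ^+ n by apply: exprn_ge0.
have -> : t * t ^+ n * (1 + n.+1%:R * (1 - t)) =
   t ^+ n * (1 + n%:R * (1 - t)) - t ^+ n * (n.+1%:R * (1 - t) ^+ 2).
  by rewrite -natr1; ring.
rewrite lerBlDr lerDl; apply: mulr_ge0 => //; apply: mulr_ge0 => //; exact: sqr_ge0.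
Qed.

Lemma PowSmall (t D : R) : 0 <= t -> t < 1 -> 0 <= D ->
  exists n0 : nat, forall n, (n0 <= n)%N -> D * t ^+ n <= 1.
Proof.
move=> t0 t1 D0.
have t1' : 0 < 1 - t by rewrite subr_gt0.
exists (Num.bound (D / (1 - t))) => n hn.
have h1 : D / (1 - t) < n%:R.
  apply: (lt_le_trans (archi_boundP _)); first by rewrite divr_ge0 // ltW.
  by rewrite ler_nat.
have h2 : D <= n%:R * (1 - t).
  by move: h1; rewrite ltr_pdivrMr // => /ltW.
have tn : 0 <= t ^+ n by apply: exprn_ge0.
have tt : 0 <= t <= 1 by rewrite t0 (ltW t1).
apply: le_trans (Bern n tt).
rewrite [X in _ <= X]mulrC ler_wpM2r //.
by rewrite (le_trans h2) // lerDr.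
Qed.

Lemma Bez (p q c : R) : 0 < p -> p < q -> q <= c ->
  exists (n : nat) (k : R) (E : {poly R}),
  [/\ 0 < k, sos E & 'X * E + ('X - p%:P) * ('X - q%:P) * (k%:P * (c%:P - 'X) ^+ n.*2.+1) = 1].
Proof.
move=> p0 pq qc.
have q0 : 0 < q by apply: lt_trans pq.
have c0 : 0 < c by apply: lt_le_trans qc.
pose t := (c - q) / c.
have t0 : 0 <= t by rewrite divr_ge0 ?subr_ge0 // ltW.
have t1 : t < 1 by rewrite ltr_pdivrMr // mul1r ltrBlDr ltrDl.
pose D := c ^+ 2 / (p * q).
have D0 : 0 <= D by rewrite divr_ge0 ?sqr_ge0 // mulr_ge0 // ltW.
have [n0 hn0] := PowSmall t0 t1 D0.
pose N := n0.*2.+1.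
have hN : D * t ^+ N <= 1 by apply: hn0; rewrite /N; lia.
have oN : odd N by rewrite /N /= odd_double.
pose k := (p * q * c ^+ N)^-1.
have pqc0 : 0 < p * q * c ^+ N by rewrite !mulr_gt0 // exprn_gt0.
have k0 : 0 < k by rewrite invr_gt0.
have hk0 : p * q * c ^+ N != 0 by rewrite gt_eqF.
have hk : p * q * (k * c ^+ N) = 1.
  have -> : p * q * (k * c ^+ N) = (p * q * c ^+ N) * k by ring.
  by rewrite /k mulfV.
pose s := ('X - p%:P) * ('X - q%:P).
pose E2 := k%:P * (c%:P - 'X) ^+ N.
pose G := 1 - s * E2.
have G0 : root G 0.
  by rewrite rootE /G /s /E2 !hornerE /= subr0 mulrNN -mulrA hk subrr.
have [E eE] := factor_theorem _ _ G0.
have eX : 'X * E = G by rewrite eE subr0 mulrC.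
exists n0, k, E; split => //; last by rewrite eX /G /s /E2 subrK.
apply: NN => y.
have key : forall y, y != 0 -> y * E.[y] = 1 - (y - p) * (y - q) * (k * (c - y) ^+ N).
  move=> z _; have := congr1 (horner^~ z) eX.
  by rewrite /G /s /E2 !hornerE => ->.
have main : forall y, y != 0 -> 0 <= y * (1 - (y - p) * (y - q) * (k * (c - y) ^+ N)).
  move=> z zn0.
  have [zneg|zpos] := ltrP z 0.
    suff : 1 <= (z - p) * (z - q) * (k * (c - z) ^+ N) by move=> h; nra.
    have h1 : p * q <= (z - p) * (z - q) by nra.
    have h2 : c ^+ N <= (c - z) ^+ N by apply: powle; lra.
    rewrite -hk; apply: ler_pM; [by rewrite mulr_ge0 // ltW |
      by rewrite mulr_ge0 ?exprn_ge0 // ltW | exact: h1 | by rewrite ler_pM2l].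
  have zpos' : 0 < z by rewrite lt_neqAle eq_sym zn0.
  suff : (z - p) * (z - q) * (k * (c - z) ^+ N) <= 1 by move=> h; nra.
  have [zp|zp] := lerP z p.
    have h1 : 0 <= (z - p) * (z - q) <= p * q by apply/andP; split; nra.
    have h2 : (c - z) ^+ N <= c ^+ N by apply: powle; lra.
    have h3 : 0 <= (c - z) ^+ N by apply: exprn_ge0; lra.
    rewrite -hk; move/andP: h1 => [h1 h1']; apply: ler_pM; [exact: h1 |
      by rewrite mulr_ge0 // ltW | exact: h1' | by rewrite ler_pM2l].
  have [zq|zq] := lerP z q.
    have h1 : (z - p) * (z - q) <= 0 by nra.
    have h3 : 0 <= k * (c - z) ^+ N.
      by apply: mulr_ge0; [exact: ltW | apply: exprn_ge0; lra].
    by apply: (le_trans _ ler01); apply: mulr_le0_ge0.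
  have [zc|zc] := lerP z c.
    have h1 : 0 <= (z - p) * (z - q) <= c ^+ 2 by apply/andP; split; nra.
    have h2 : (c - z) ^+ N <= (c - q) ^+ N by apply: powle; lra.
    have h3 : 0 <= (c - z) ^+ N by apply: exprn_ge0; lra.
    have e : (c - q) ^+ N = t ^+ N * c ^+ N.
      by rewrite -exprMn /t divfK // gt_eqF.
    apply: le_trans hN; move/andP: h1 => [h1 h1'].
    have -> : D * t ^+ N = c ^+ 2 * (k * (c - q) ^+ N).
      rewrite e /D /k invfM /=; field.
      by rewrite !gt_eqF // exprn_gt0.
    apply: ler_pM; [exact: h1 | by rewrite mulr_ge0 // ltW | exact: h1' |
      by rewrite ler_pM2l].
  have h1 : 0 <= (z - p) * (z - q) by nra.
  have h3 : (c - z) ^+ N <= 0 by rewrite exprn_odd_le0 //; lra.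
  apply: (le_trans _ ler01); rewrite mulr_ge0_le0 // mulr_ge0_le0 // ltW //.
have [->|yn0] := eqVneq y 0.
  apply: (@edge_l _ _ 0 1); first exact: ltr01.
  move=> z /andP [z0 z1]; have := main z (lt0r_neq0 z0); rewrite -key ?lt0r_neq0 //.
  by rewrite mulrA -expr2 pmulr_rge0 // exprn_even_gt0 //= lt0r_neq0.
have := main y yn0; rewrite -key // mulrA -expr2.
by rewrite pmulr_rge0 // exprn_even_gt0.
Qed.

Definition T2 (A B : R) (f : {poly R}) := exists s0 s1 s2 s3,
  [/\ sos s0, sos s1, sos s2, sos s3 &
   f = s0 + ('X - A%:P) * s1 + (B%:P - 'X) * s2 + ('X - A%:P) * (B%:P - 'X) * s3].

Lemma T2_add A B f g : T2 A B f -> T2 A B g -> T2 A B (f + g).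
Proof.
move=> [s0 [s1 [s2 [s3 [h0 h1 h2 h3 ->]]]]] [t0 [t1 [t2 [t3 [k0 k1 k2 k3 ->]]]]].
exists (s0 + t0), (s1 + t1), (s2 + t2), (s3 + t3); split; try exact: sosD.
ring.
Qed.

Lemma T2_sos A B f : sos f -> T2 A B f.
Proof.
move=> h; exists f, 0, 0, 0; split; try exact: sos0; first exact: h.
by rewrite !mulr0 !addr0.
Qed.

Lemma T2_mulr A B f : T2 A B f -> T2 A B ((B%:P - 'X) * f).
Proof.
move=> [s0 [s1 [s2 [s3 [h0 h1 h2 h3 ->]]]]].
exists ((B%:P - 'X) ^+ 2 * s2), ((B%:P - 'X) ^+ 2 * s3), s0, s1; split => //;
  try exact: sos_mulsqr.
ring.
Qed.

Lemma T2_mull A B f : T2 A B f -> T2 A B (('X - A%:P) * f).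
Proof.
move=> [s0 [s1 [s2 [s3 [h0 h1 h2 h3 ->]]]]].
exists (('X - A%:P) ^+ 2 * s1), s0, (('X - A%:P) ^+ 2 * s3), s2; split => //;
  try exact: sos_mulsqr.
ring.
Qed.

Lemma T2_scale A B (c : R) f : 0 <= c -> T2 A B f -> T2 A B (c%:P * f).
Proof.
move=> c0 [s0 [s1 [s2 [s3 [h0 h1 h2 h3 ->]]]]].
exists (c%:P * s0), (c%:P * s1), (c%:P * s2), (c%:P * s3); split;
  try (apply: sosM => //; exact: sosC).
ring.
Qed.

Lemma IL A B f : A < B -> (forall x, A <= x <= B -> 0 <= f.[x]) -> T2 A B f.
Proof.
move=> AB; move: {2}(size f) (leqnn (size f)) => n; elim: n f => [|n ih] f hs hf.
  by move: hs; rewrite leqn0 size_poly_eq0 => /eqP ->; apply: T2_sos; apply: sos0.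
have [H|H] := pselect (forall x, 0 <= f.[x]); first by apply: T2_sos; apply: NN.
move/existsNP: H => [x1]; move/negP; rewrite -ltNge => hx1.
have fn0 : f != 0 by apply/eqP => f0; move: hx1; rewrite f0 horner0 ltxx.
have gpos : forall g : {poly R}, (forall y, A < y < B -> 0 <= g.[y]) ->
    forall x, A <= x <= B -> 0 <= g.[x].
  move=> g hg x /andP [x1' x2'].
  have [xA|xA] := eqVneq x A; first by rewrite xA; apply: (edge_l AB).
  have [xB|xB] := eqVneq x B; first by rewrite xB; apply: (edge_r AB).
  apply: hg; apply/andP; split; rewrite lt_neqAle ?x1' ?x2' andbT //.
  by rewrite eq_sym.
have [x1B|x1B] := ltrP B x1.
  have hB : A <= B <= B by rewrite lexx ltW.
  have := hf B hB => fB.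
  have [r /andP [rB rx1] rr] := @polyrcf.poly_ivt _ f B x1 (ltW x1B) (mulr_ge0_le0 fB (ltW hx1)).
  have [g eg] := factor_theorem _ _ rr.
  have gn0 : g != 0 by apply: contraNneq fn0; rewrite eg => ->; rewrite mul0r.
  have sg : (size g < size f)%N.
    by rewrite eg size_mul ?polyXsubC_eq0 // size_XsubC addn2 /=.
  have ef : f = (B%:P - 'X) * (- g) + (r - B)%:P * (- g).
    by rewrite eg polyCB; ring.
  have hg' : forall x, A <= x <= B -> 0 <= (- g).[x].
    apply: gpos => y /andP [y1 y2].
    have := hf y; rewrite eg hornerM hornerXsubC hornerN oppr_ge0.
    have yr : y - r < 0 by rewrite subr_lt0 (lt_le_trans y2).
    by rewrite nmulr_lge0 // => h; apply: h; rewrite !ltW.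
  have IHg : T2 A B (- g) by apply: ih => //; rewrite size_polyN -ltnS (leq_trans sg hs).
  rewrite ef; apply: T2_add; [exact: T2_mulr | apply: T2_scale => //; by rewrite subr_ge0].
have [x1A|x1A] := ltrP x1 A.
  have hA : A <= A <= B by rewrite lexx ltW.
  have := hf A hA => fA.
  have [r hr rr] :=
    @polyrcf.poly_ivt _ f x1 A (ltW x1A) (mulr_le0_ge0 (ltW hx1) fA).
  move: hr; rewrite in_itv /= => /andP [rx1 rA].
  have [g eg] := factor_theorem _ _ rr.
  have gn0 : g != 0 by apply: contraNneq fn0; rewrite eg => ->; rewrite mul0r.
  have sg : (size g < size f)%N.
    by rewrite eg size_mul ?polyXsubC_eq0 // size_XsubC addn2 /=.
  have ef : f = ('X - A%:P) * g + (A - r)%:P * g.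
    by rewrite eg polyCB; ring.
  have hg' : forall x, A <= x <= B -> 0 <= g.[x].
    apply: gpos => y /andP [y1 y2].
    have := hf y; rewrite eg hornerM hornerXsubC.
    have yr : 0 < y - r by rewrite subr_gt0 (le_lt_trans rA y1).
    by rewrite pmulr_lge0 // => h; apply: h; rewrite !ltW.
  have IHg : T2 A B g by apply: ih => //; rewrite -ltnS (leq_trans sg hs).
  rewrite ef; apply: T2_add; [exact: T2_mull | apply: T2_scale => //; by rewrite subr_ge0].
exfalso; move: hx1; rewrite ltNge hf //; apply/andP; split => //.
Qed.

End Real2.


Section Gaps.
Variable R : realType.
Implicit Types (f g : {poly R}) (x y : R).

Lemma sos_comp (u E : {poly R}) : sos E -> sos (E \Po u).
Proof. exact: (sos_morph (comp_poly u)). Qed.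

Lemma onegap (u : {poly R}) (p q c : R) : 0 <= p -> p < q -> q <= c ->
  exists s1 s2 s3, [/\ sos s1, sos s2, sos s3 &
    u * ((u - p%:P) * (u - q%:P)) =
      s1 * ((u - p%:P) * (u - q%:P)) + s2 * u + s3 * (u * (c%:P - u))].
Proof.
move=> p0 pq qc; have q0 : 0 < q by apply: le_lt_trans pq.
have [p00|p0'] := eqVneq p 0.
  exists q%:P, ((u - q%:P) ^+ 2), 0; split; [exact: sosC (ltW q0)|exact: sos_sqr|exact: sos0|].
  rewrite p00 subr0; ring.
have pp : 0 < p by rewrite lt_neqAle eq_sym p0' p0.
have [n [k [E [k0 sE hE]]]] := Bez pp pq qc.
have hu := congr1 (comp_poly u) hE.
rewrite rmorph1 !rmorphD !rmorphM /= !rmorphB /= rmorphXn /= !rmorphB /=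
  !comp_polyX !comp_polyC in hu.
exists (u ^+ 2 * (E \Po u)),  0, (k%:P * ((u - p%:P) * (u - q%:P)) ^+ 2 * (c%:P - u) ^+ n.*2).
split; [by apply: sos_mulsqr; apply: sos_comp | exact: sos0 | |].
  have := sosM (sosM (sosC (ltW k0)) (sos_sqr ((u - p%:P) * (u - q%:P))))
    (sos_sqr ((c%:P - u) ^+ n)).
  by rewrite -exprM muln2.
rewrite -[LHS]mulr1 -{1}hu exprSr; ring.
Qed.

Lemma twogap (A B al be ga de : R) : A <= al -> al < be -> be < ga -> ga < de ->
  de <= B ->
  exists e1 e2, [/\ sos e1, T2 A B e2 &
    ('X - be%:P) * ('X - al%:P) * e1 + ('X - de%:P) * ('X - ga%:P) * e2 = 1].
Proof.
move=> Aal albe bega gade deB.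
have AB : A < B by lra.
pose qi := ('X - be%:P) * ('X - al%:P).
pose qj := ('X - de%:P) * ('X - ga%:P).
have qiE : forall x, qi.[x] = (x - be) * (x - al) by move=> x; rewrite !hornerE.
have qjE : forall x, qj.[x] = (x - de) * (x - ga) by move=> x; rewrite !hornerE.
pose th := (al - A) / (ga - A).
have th0 : 0 <= th by rewrite divr_ge0 //; lra.
have th1 : th < 1 by rewrite ltr_pdivrMr ?mul1r; lra.
pose qg := (ga - be) * (ga - al).
have qg0 : 0 < qg by rewrite mulr_gt0 //; lra.
pose Dd := (B - A) ^+ 2 / qg.
have Dd0 : 0 <= Dd by rewrite divr_ge0 ?sqr_ge0 // ltW.
have [n0 hn0] := PowSmall th0 th1 Dd0.
pose m := n0.*2.
have hm : Dd * th ^+ m <= 1 by apply: hn0; rewrite /m; lia.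
pose phi := ('X - A%:P) ^+ m.
pose psi := qi * phi.
have psiE : forall x, psi.[x] = (x - be) * (x - al) * (x - A) ^+ m.
  by move=> x; rewrite /psi /phi hornerM qiE horner_exp hornerXsubC.
have mono : forall x y, be <= x -> x <= y -> psi.[x] <= psi.[y].
  move=> x y bx xy; rewrite !psiE; apply: ler_pM.
  - by apply: mulr_ge0; lra.
  - by apply: exprn_ge0; lra.
  - nra.
  - by apply: powle; lra.
pose p0 := psi.[ga]; pose q0 := psi.[de]; pose c0 := psi.[B].
have p00 : 0 < p0 by rewrite /p0 psiE; apply: mulr_gt0; [apply: mulr_gt0|apply: exprn_gt0]; lra.
have pq0 : p0 < q0.
  rewrite /p0 /q0 !psiE.
  apply: (lt_le_trans (y := (de - be) * (de - al) * (ga - A) ^+ m)).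
    rewrite ltr_pM2r; [nra | apply: exprn_gt0; lra].
  rewrite ler_pM2l; [apply: powle; lra | nra].
have qc0 : q0 <= c0 by apply: mono; lra.
have left : forall x, A <= x <= ga -> psi.[x] <= p0.
  move=> x /andP [Ax xg].
  have [xal|xal] := lerP x al.
    have h1 : psi.[x] <= (B - A) ^+ 2 * (al - A) ^+ m.
      rewrite psiE; apply: ler_pM.
      - nra.
      - by apply: exprn_ge0; lra.
      - rewrite expr2; nra.
      - by apply: powle; lra.
    apply: le_trans h1 _.
    have e : (al - A) ^+ m = th ^+ m * (ga - A) ^+ m.
      by rewrite -exprMn /th divfK //; lra.
    rewrite /p0 psiE e mulrA; apply: ler_wpM2r; first by apply: exprn_ge0; lra.
    by move: hm; rewrite /Dd mulrAC ler_pdivrMr // mul1r.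
  have [xbe|xbe] := ltrP x be.
    have : psi.[x] <= 0.
      rewrite psiE; apply: mulr_le0_ge0; [nra | apply: exprn_ge0; lra].
    by move=> h; apply: le_trans h (ltW p00).
  by apply: mono.
have psic : forall x, A <= x <= B -> psi.[x] <= c0.
  move=> x /andP [Ax xB]; have [xg|xg] := lerP x ga.
    by apply: le_trans (left x _) _; [rewrite Ax xg | apply: mono; lra].
  by apply: mono; lra.
have [N [k [E [k0 sE hE]]]] := Bez p00 pq0 qc0.
have hu := congr1 (comp_poly psi) hE.
rewrite rmorph1 !rmorphD !rmorphM /= !rmorphB /= rmorphXn /= !rmorphB /=
  !comp_polyX !comp_polyC in hu.
pose P := (psi - p0%:P) * (psi - q0%:P).
have PE : forall x, P.[x] = (psi.[x] - p0) * (psi.[x] - q0).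
  by move=> x; rewrite /P hornerM !hornerD !hornerN !hornerC.
have rP : root P ga by rewrite rootE PE -/p0 subrr mul0r.
have [r1 er1] := factor_theorem _ _ rP.
have rr1 : root r1 de.
  have : P.[de] = 0 by rewrite PE -/q0 subrr mulr0.
  rewrite er1 hornerM hornerXsubC => /eqP; rewrite mulf_eq0 subr_eq0 => /orP [//|].
  by move=> /eqP h; exfalso; move: gade; rewrite h ltxx.
have [r er] := factor_theorem _ _ rr1.
have eP : P = qj * r by rewrite er1 er /qj; ring.
exists (phi * (E \Po psi)), (r * (k%:P * (c0%:P - psi) ^+ N.*2.+1)); split.
- by rewrite /phi /m -muln2 exprM; apply: sos_mulsqr; apply: sos_comp.
- have key : forall x, (x - de) * (x - ga) * r.[x] = (psi.[x] - p0) * (psi.[x] - q0).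
    by move=> x; rewrite -PE eP hornerM qjE.
  have rmid : forall y, ga < y < de -> 0 <= r.[y].
    move=> y /andP [y1 y2].
    have q1 : (y - de) * (y - ga) < 0 by nra.
    have h1 : p0 <= psi.[y] by apply: mono; lra.
    have h2 : psi.[y] <= q0 by apply: mono; lra.
    rewrite -(nmulr_rle0 _ q1) key; nra.
  have rpos : forall x, A <= x <= B -> 0 <= r.[x].
    move=> x /andP [Ax xB].
    have [xg|xg] := ltrP x ga.
      have q1 : 0 < (x - de) * (x - ga) by nra.
      have h1 : psi.[x] <= p0 by apply: left; rewrite Ax ltW.
      by rewrite -(pmulr_rge0 _ q1) key; nra.
    have [->|xg'] := eqVneq x ga; first by apply: (edge_l gade).
    have [xd|xd] := ltrP x de.
      by apply: rmid; rewrite xd andbT lt_neqAle eq_sym xg' xg.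
    have [->|xd'] := eqVneq x de; first by apply: (edge_r gade).
    have xd2 : de < x by rewrite lt_neqAle eq_sym xd' xd.
    have q1 : 0 < (x - de) * (x - ga) by nra.
    have h1 : q0 <= psi.[x] by apply: mono; lra.
    by rewrite -(pmulr_rge0 _ q1) key; nra.
  apply: IL => // x hx; rewrite hornerM; apply: mulr_ge0; first exact: rpos.
  rewrite hornerM hornerC; apply: mulr_ge0; first exact: ltW.
  rewrite horner_exp; apply: exprn_ge0; rewrite hornerD hornerN hornerC subr_ge0; exact: psic.
- rewrite -hu -/P eP /psi /qi /qj; ring.
Qed.
End Gaps.


Section Nat.
Variables (R : realType) (k : nat) (a b : nat -> R).
Hypothesis hab : forall i, (i <= k)%N -> a i <= b i.
Hypothesis hba : forall i, (i < k)%N -> b i < a i.+1.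

Let S := natgens k a b.
Let l := 'X - (a 0)%:P.
Let r := (b k)%:P - 'X.
Let qq j := ('X - (a j.+1)%:P) * ('X - (b j)%:P).
Let A0 := a 0.
Let B0 := b k.

Lemma sizeS : size S = k.+2.
Proof. by rewrite /S /natgens /= size_rcons size_map size_iota. Qed.

Lemma S0 : S`_0 = l. Proof. by []. Qed.

Lemma Sk : S`_k.+1 = r.
Proof. by rewrite /S /natgens /= nth_rcons size_map size_iota ltnn eqxx. Qed.

Lemma Sj j : (j < k)%N -> S`_j.+1 = qq j.
Proof.
move=> jk; rewrite /S /natgens /= nth_rcons size_map size_iota jk.
by rewrite (nth_map 0%N) ?size_iota // nth_iota.
Qed.

Lemma ba_lt m n : (m < n)%N -> (n <= k)%N -> b m < a n.
Proof.
elim: n => [//|n ih] mn nk.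
have [e|mn'] := eqVneq m n; first by rewrite e; apply: hba.
have mn2 : (m < n)%N by rewrite ltn_neqAle mn' -ltnS.
apply: lt_trans (ih mn2 (ltnW nk)) _.
by apply: le_lt_trans (hab (ltnW nk)) (hba nk).
Qed.

Lemma ab_le m n : (m <= n)%N -> (n <= k)%N -> a m <= b n.
Proof.
move=> mn nk; have [e|mn'] := eqVneq m n; first by rewrite e; apply: hab.
have mn2 : (m < n)%N by rewrite ltn_neqAle mn' mn.
apply: le_trans (hab (leq_trans mn nk)) _; apply: ltW.
by apply: lt_le_trans (ba_lt mn2 nk) (hab nk).
Qed.

Lemma AB : A0 <= B0. Proof. exact: ab_le. Qed.

Lemma qm_l : QM S l. Proof. by rewrite -S0; apply: qm_gen1; rewrite sizeS. Qed.
Lemma qm_r : QM S r. Proof. by rewrite -Sk; apply: qm_gen1; rewrite sizeS. Qed.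
Lemma qm_q j s : (j < k)%N -> sos s -> QM S (s * qq j).
Proof. move=> jk hs; rewrite -(Sj jk); apply: (@qm_gen _ S j.+1 s) => //; rewrite sizeS; lia. Qed.
Lemma qm_lg s : sos s -> QM S (s * l).
Proof. by move=> hs; rewrite -S0; apply: qm_gen; rewrite ?sizeS. Qed.
Lemma qm_rg s : sos s -> QM S (s * r).
Proof. by move=> hs; rewrite -Sk; apply: qm_gen; rewrite ?sizeS. Qed.

Lemma Pab : QM S (l * r).
Proof.
have [lt|eq] := ltrP A0 B0.
  pose c := B0 - A0.
  have c0 : c != 0 by rewrite subr_eq0 gt_eqF.
  have e : l * r = (c^-1)%:P * l ^+ 2 * r + (c^-1)%:P * r ^+ 2 * l.
    have e1 : l + r = c%:P by rewrite /l /r /c polyCB; ring.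
    have e2 : (c^-1)%:P * c%:P = 1 by rewrite -polyCM mulVf.
    rewrite -[LHS]mul1r -e2 -e1; ring.
  rewrite e; apply: qm_add; [apply: qm_rg|apply: qm_lg];
    (apply: sosM; [apply: sosC; rewrite invr_ge0 subr_ge0; exact: ltW|apply: sos_sqr]).
have eAB : B0 = A0 by apply/eqP; rewrite eq_le eq AB.
have er : r = - l by rewrite /r /l; rewrite -/B0 eAB /A0; ring.
pose h := (2^-1 : R)%:P.
have h2 : h * 2 = 1.
  by rewrite /h -[2 : {poly R}]polyC_natr -polyCM mulVf // pnatr_eq0.
have e : l * r = ((l - 1) * h) ^+ 2 * l + ((l + 1) * h) ^+ 2 * r.
  rewrite er; have -> : l * - l = - ((h * 2) ^+ 2 * l ^+ 2) by rewrite h2; ring.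
  ring.
rewrite e; apply: qm_add; [apply: qm_lg|apply: qm_rg]; apply: sos_sqr.
Qed.

Lemma Pb j : (j < k)%N -> QM S (l * qq j).
Proof.
move=> jk.
have h0 : 0 <= b j - A0 by rewrite subr_ge0; apply: ab_le => //; apply: ltnW.
have h1 : b j - A0 < a j.+1 - A0 by rewrite ltrD2r; apply: hba.
have h2 : a j.+1 - A0 <= B0 - A0 by rewrite lerD2r; apply: ab_le.
have [s1 [s2 [s3 [hs1 hs2 hs3 e]]]] := onegap l h0 h1 h2.
have e1 : (l - (b j - A0)%:P) * (l - (a j.+1 - A0)%:P) = qq j.
  by rewrite /l /qq !polyCB; ring.
have e2 : (B0 - A0)%:P - l = r by rewrite /l /r polyCB; ring.
rewrite e1 e2 in e; rewrite e; apply: qm_add; first apply: qm_add.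
- exact: qm_q.
- exact: qm_lg.
- by apply: qm_mulsos => //; apply: Pab.
Qed.

Lemma Pc j : (j < k)%N -> QM S (r * qq j).
Proof.
move=> jk.
have h0 : 0 <= B0 - a j.+1 by rewrite subr_ge0; apply: ab_le.
have h1 : B0 - a j.+1 < B0 - b j by rewrite ltrD2l ltrN2; apply: hba.
have h2 : B0 - b j <= B0 - A0 by rewrite lerD2l lerN2; apply: ab_le => //; apply: ltnW.
have [s1 [s2 [s3 [hs1 hs2 hs3 e]]]] := onegap r h0 h1 h2.
have e1 : (r - (B0 - a j.+1)%:P) * (r - (B0 - b j)%:P) = qq j.
  by rewrite /r /qq !polyCB; ring.
have e2 : (B0 - A0)%:P - r = l by rewrite /l /r polyCB; ring.
rewrite e1 e2 in e; rewrite e; apply: qm_add; first apply: qm_add.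
- exact: qm_q.
- exact: qm_rg.
- by apply: qm_mulsos => //; rewrite mulrC; apply: Pab.
Qed.

Lemma ABlt : (0 < k)%N -> A0 < B0.
Proof.
move=> k0; apply: le_lt_trans (hab (leq0n k)) _.
apply: lt_le_trans (hba k0) _; exact: ab_le.
Qed.

Lemma Ptrip j : (j < k)%N -> QM S (l * r * qq j).
Proof.
move=> jk; have k0 : (0 < k)%N by apply: leq_ltn_trans jk.
pose c := B0 - A0.
have c0 : 0 < c by rewrite subr_gt0; apply: ABlt.
have e : l * r * qq j = (c^-1)%:P * l ^+ 2 * (r * qq j) + (c^-1)%:P * r ^+ 2 * (l * qq j).
  have e1 : l + r = c%:P by rewrite /l /r /c polyCB; ring.
  have e2 : (c^-1)%:P * c%:P = 1 by rewrite -polyCM mulVf // gt_eqF.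
  rewrite -[LHS]mul1r -e2 -e1; ring.
have hc : sos (c^-1)%:P by apply: sosC; rewrite invr_ge0 ltW.
rewrite e; apply: qm_add; apply: qm_mulsos; try (apply: sosM => //; apply: sos_sqr).
  exact: Pc.
exact: Pb.
Qed.

Lemma PqT2 j f : (j < k)%N -> T2 A0 B0 f -> QM S (qq j * f).
Proof.
move=> jk [s0 [s1 [s2 [s3 [h0 h1 h2 h3 ->]]]]].
have -> : qq j * (s0 + ('X - A0%:P) * s1 + (B0%:P - 'X) * s2 +
    ('X - A0%:P) * (B0%:P - 'X) * s3) =
  s0 * qq j + s1 * (l * qq j) + s2 * (r * qq j) + s3 * (l * r * qq j).
  by rewrite /l /r; ring.
apply: qm_add; first apply: qm_add; first apply: qm_add.
- exact: qm_q.
- by apply: qm_mulsos => //; apply: Pb.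
- by apply: qm_mulsos => //; apply: Pc.
- by apply: qm_mulsos => //; apply: Ptrip.
Qed.

Lemma Pd i j : (i < j)%N -> (j < k)%N -> QM S (qq i * qq j).
Proof.
move=> ij jk; have ik : (i < k)%N by apply: ltn_trans jk.
have Aal : A0 <= b i by apply: ab_le => //; apply: ltnW.
have albe : b i < a i.+1 by apply: hba.
have bega : a i.+1 <= b j by apply: ab_le => //; apply: ltnW.
have gade : b j < a j.+1 by apply: hba.
have deB : a j.+1 <= B0 by apply: ab_le.
have [blt|beq] := ltrP (a i.+1) (b j).
  have [e1 [e2 [he1 he2 e]]] := twogap Aal albe blt gade deB.
  have -> : qq i * qq j = (qq i) ^+ 2 * (e1 * qq j) + (qq j) ^+ 2 * (qq i * e2).
    rewrite -[LHS]mulr1 -e /qq; ring.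
  apply: qm_add; apply: qm_mulsos; try exact: sos_sqr.
    exact: qm_q.
  exact: PqT2.
have ebg : b j = a i.+1 by apply/eqP; rewrite eq_le beq bega.
pose al := b i; pose be := a i.+1; pose de := a j.+1.
have dal : 0 < de - al by rewrite subr_gt0; apply: lt_trans albe _; rewrite /be -ebg.
pose a' := (de - be) / (de - al); pose b' := (be - al) / (de - al).
have a'0 : 0 <= a'.
  by apply: divr_ge0; [rewrite subr_ge0 /de /be -ebg; exact: ltW | exact: ltW].
have b'0 : 0 <= b'.
  by apply: divr_ge0; [rewrite subr_ge0; exact: ltW | exact: ltW].
have e : qq i * qq j = (a'%:P * ('X - al%:P) ^+ 2) * qq j + (b'%:P * ('X - de%:P) ^+ 2) * qq i.
  apply: (@mulfI _ (de - al)%:P); first by rewrite polyC_eq0 gt_eqF.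
  have ea : (de - al)%:P * a'%:P = (de - be)%:P by rewrite -polyCM mulrC divfK // gt_eqF.
  have eb : (de - al)%:P * b'%:P = (be - al)%:P by rewrite -polyCM mulrC divfK // gt_eqF.
  rewrite mulrDr !mulrA ea eb /qq ebg -/be -/de -/al !polyCB; ring.
rewrite e; apply: qm_add; apply: qm_q => //; apply: sosM; try exact: sos_sqr; exact: sosC.
Qed.

Lemma pairs_lt i j : (i < j)%N -> (j < k.+2)%N -> QM S (S`_i * S`_j).
Proof.
case: j => [//|j] ij jk.
have [ejk|njk] := eqVneq j k.
  rewrite ejk Sk; case: i ij => [|i] ij; first by rewrite S0; apply: Pab.
  have ik : (i < k)%N by rewrite -ejk.
  by rewrite Sj // mulrC; apply: Pc.
have jk' : (j < k)%N by rewrite ltn_neqAle njk -ltnS.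
rewrite Sj //; case: i ij => [|i] ij; first by rewrite S0; apply: Pb.
by rewrite Sj; [apply: Pd | apply: ltn_trans jk'].
Qed.

Lemma pairs i j : (i < size S)%N -> (j < size S)%N -> i != j -> QM S (S`_i * S`_j).
Proof.
rewrite sizeS => hi hj ij.
have [lt|gt] := ltnP i j; first exact: pairs_lt.
rewrite mulrC; apply: pairs_lt => //.
by rewrite ltn_neqAle eq_sym ij gt.
Qed.

End Nat.

Theorem lemma1 (R : realType) (k : nat) (a b : nat -> R)
  (hab : forall i, (i <= k)%N -> a i <= b i)
  (hba : forall i, (i < k)%N -> b i < a i.+1) :
  (forall p : {poly R},
     preordering (natgens k a b) p <-> qmodule (natgens k a b) p) /\
  (forall p : {poly {poly R}},
     preordering (map polyC (natgens k a b)) p <->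
     qmodule (map polyC (natgens k a b)) p).
Proof.
split=> p; split.
- by apply: pr_qm; apply: pairs.
- exact: qm_pr.
- apply: pr_qm => i j; rewrite size_map => hi hj ij.
  rewrite !(nth_map 0) // -rmorphM; apply: qm_morph; exact: pairs.
- exact: qm_pr.
Qed.
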